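(* Let $G$ be an oriented graph derived from a Burling tree $(T,r,\ell,c)$, let $H$ be a hole of $G$, let $p$ be the pivot of $H$, and let $C$ be the connected component of $G\setminus N^-[p]$ that contains $H\setminus N^-[p]$. Then every vertex of $C$ is a descendant of $p$ in $T$.
   Context: Graphs are finite, without loops or multiple edges; oriented graphs have no pair of opposite arcs; connectivity of an oriented graph refers to its underlying graph. In a rooted tree $T$ with root $r$, each non-root vertex $v$ has a parent $p(v)$; children, leaves, ancestors and descendants are as usual (every vertex is an ancestor and a descendant of itself). A branch is a sequence $v_1\dots v_k$ ($k\ge0$) with $v_i$ the parent of $v_{i+1}$; it starts at $v_1$. A Burling tree is a 4-tuple $(T,r,\ell,c)$: $T$ a rooted tree with root $r$; $\ell$ assigns to each non-leaf vertex $v$ one of its children $\ell(v)$ (the last-born of $v$); $c$ assigns to every vertex $v$ that is neither the root nor a last-born the vertex-set of a (possibly empty) branch starting at $\ell(p(v))$, and $c(v)=\emptyset$ if $v$ is the root or a last-born. The oriented graph fully derived from it has vertex-set $V(T)$ and an arc $uv$ iff $v\in c(u)$; an oriented graph is derived from the Burling tree if it is an induced subgraph of the fully derived one. $N^-[v]$ denotes $v$ together with its in-neighbors. A hole of an oriented graph is an induced cycle of length at least $4$ of its underlying graph. If $G$ is derived from $T$ and $H$ is a hole of $G$, then (as established in the paper) $H$ with the inherited orientation has exactly two sources, called its antennas, and exactly two sinks; exactly one of these sinks is adjacent to both antennas and is an ancestor in $T$ of all vertices of $H$ other than the antennas: it is the pivot of $H$; the other sink is the bottom of $H$. *)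

(* Defs.v *)
From mathcomp Require Import all_boot.
Set Implicit Arguments. Unset Strict Implicit. Unset Printing Implicit Defensive.

Section Burling.
Variable V : finType.

(* Rooted tree on V: root r, parent function par (par r = r by convention;
   the root's "parent" is irrelevant). Every vertex reaches r by iterating par. *)
Definition rooted_tree (r : V) (par : V -> V) : Prop :=
  par r = r /\ forall v, exists k, iter k par v = r.

Definition child (r : V) (par : V -> V) (v u : V) : bool := (u != r) && (par u == v).

Definition is_leaf (r : V) (par : V -> V) (v : V) : bool := [forall u, ~~ child r par v u].

(* a is an ancestor of v (every vertex is an ancestor of itself);
   equivalently v is a descendant of a *)
Definition ancestor (par : V -> V) (a v : V) : Prop := exists k, iter k par v = a.

Definition branch_set_from (r : V) (par : V -> V) (x : V) (B : {set V}) : Prop :=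
  B = set0 \/
  exists s : seq V, path (child r par) x s /\ B = [set y in x :: s].

Definition is_last_born (r : V) (par : V -> V) (l : V -> V) (v : V) : bool :=
  (v != r) && (v == l (par v)).

Definition burling_tree (r : V) (par : V -> V) (l : V -> V) (c : V -> {set V}) : Prop :=
  rooted_tree r par /\
  (forall v, ~~ is_leaf r par v -> child r par v (l v)) /\
  (forall v, (v == r) || is_last_born r par l v -> c v = set0) /\
  (forall v, v != r -> ~~ is_last_born r par l v ->
      branch_set_from r par (l (par v)) (c v)).

(* G is the subgraph of the fully derived graph induced by S:
   arc u v iff u, v in S and v \in c u *)
Definition arc (S : {set V}) (c : V -> {set V}) (u v : V) : bool :=
  [&& u \in S, v \in S & v \in c u].

Definition adj (S : {set V}) (c : V -> {set V}) (u v : V) : bool :=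
  arc S c u v || arc S c v u.

(* h is (the cyclic vertex sequence of) a hole of G: an induced cycle of
   length >= 4 of the underlying graph. The default x0 of nth is irrelevant
   since indices are in range. *)
Definition is_hole (S : {set V}) (c : V -> {set V}) (h : seq V) : Prop :=
  [/\ 4 <= size h, uniq h, {subset h <= S} &
      forall (x0 : V) i j, i < size h -> j < size h ->
        adj S c (nth x0 h i) (nth x0 h j) =
        (j == i.+1 %% size h) || (i == j.+1 %% size h)].

Definition hole_source (S : {set V}) (c : V -> {set V}) (h : seq V) (v : V) : bool :=
  (v \in h) && [forall w, (w \in h) ==> ~~ arc S c w v].
Definition hole_sink (S : {set V}) (c : V -> {set V}) (h : seq V) (v : V) : bool :=
  (v \in h) && [forall w, (w \in h) ==> ~~ arc S c v w].

Definition is_pivot (par : V -> V) (S : {set V}) (c : V -> {set V}) (h : seq V) (p : V) : Prop :=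
  hole_sink S c h p /\
  (forall a, hole_source S c h a -> adj S c p a) /\
  (forall v, v \in h -> ~~ hole_source S c h v -> ancestor par p v).

Definition closed_in_nbhd (S : {set V}) (c : V -> {set V}) (p : V) : {set V} :=
  p |: [set u | arc S c u p].

Definition adj_minus (S : {set V}) (c : V -> {set V}) (p : V) : rel V :=
  fun u v => [&& u \in S :\: closed_in_nbhd S c p, v \in S :\: closed_in_nbhd S c p
                & adj S c u v].

End Burling.

(* Main.v *)
Require Import Defs.
From mathcomp Require Import all_boot.

Set Implicit Arguments.
Section Aux.
Variable V : finType.

Lemma anc_trans (par : V -> V) a b d :
  ancestor par a b -> ancestor par b d -> ancestor par a d.
Proof.
move=> [k Hk] [m Hm]; exists (k + m); by rewrite iterD Hm.
Qed.

Lemma anc_par (par : V -> V) p u : ancestor par p u -> u != p -> ancestor par p (par u).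
Proof.
move=> [[|k] Hk] Hne; first by rewrite /= in Hk; rewrite Hk eqxx in Hne.
by exists k; rewrite -iterSr.
Qed.

Lemma anc_of_par (par : V -> V) p u : ancestor par p (par u) -> ancestor par p u.
Proof. by move=> [k Hk]; exists k.+1; rewrite iterSr. Qed.

Lemma path_anc (r : V) par x s y :
  path (child r par) x s -> y \in x :: s -> ancestor par x y.
Proof.
elim: s x => [|z s IH] x /=.
  by move=> _; rewrite inE => /eqP ->; exists 0.
move=> /andP [Hxz Hp]; rewrite inE => /orP [/eqP -> | Hy]; first by exists 0.
have := IH z Hp Hy. move/andP: Hxz => [_ /eqP Hz].
move=> Ha; apply: anc_trans Ha; exists 1; by rewrite /= Hz.
Qed.

Lemma path_anc2 (r : V) par x s p u :
  path (child r par) x s -> u \in x :: s -> ancestor par p u ->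
  p \in x :: s \/ ancestor par p (par x).
Proof.
elim: s x => [|z s IH] x /=.
  move=> _; rewrite inE => /eqP -> [[|k] Hk].
    by left; rewrite /= in Hk; rewrite Hk inE eqxx.
  by right; exists k; rewrite -iterSr.
move=> /andP [Hxz Hp]; rewrite inE => /orP [/eqP -> | Hy] [k Hk].
  case: k Hk => [|k] Hk.
    by left; rewrite /= in Hk; rewrite Hk inE eqxx.
  by right; exists k; rewrite -iterSr.
move/andP: Hxz => [_ /eqP Hz].
case: (IH z Hp Hy (ex_intro _ k Hk)) => [Hin|[m Hm]].
  by left; rewrite inE Hin orbT.
rewrite Hz in Hm; case: m Hm => [|m] Hm.
  by left; rewrite /= in Hm; rewrite Hm inE eqxx.
by right; exists m; rewrite -iterSr.
Qed.
End Aux.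

Theorem lemma6p1 (V : finType) (r : V) (par : V -> V) (l : V -> V)
    (c : V -> {set V}) (S : {set V}) (h : seq V) (p : V) :
  burling_tree r par l c ->
  is_hole S c h ->
  is_pivot par S c h p ->
  forall x y : V,
    x \in h -> x \in S :\: closed_in_nbhd S c p ->
    connect (adj_minus S c p) x y ->
    ancestor par p y.
Proof.
move=> [_ [Hl [Hc0 Hc]]] [_ _ HhS _] [Hsink [Hsrc Hanc]] x y xh xSN.
have pS : p \in S by apply: HhS; case/andP: Hsink.
have Hbr : forall v w, w \in c v ->
   [/\ v != r, ~~ is_last_born r par l v, par (l (par v)) = par v &
    exists s, path (child r par) (l (par v)) s /\ c v = [set y in l (par v) :: s]].
  move=> v w Hw.
  have Hvr : v != r by apply/negP => /eqP E; subst v; by rewrite (Hc0 r) ?eqxx ?inE in Hw.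
  have Hlb : ~~ is_last_born r par l v.
    by apply/negP => E; rewrite (Hc0 v) ?E ?orbT ?inE in Hw.
  have Hnl : ~~ is_leaf r par (par v).
    apply/negP => /forallP /(_ v); by rewrite /child Hvr eqxx.
  have /andP [_ /eqP Hpl] := Hl _ Hnl.
  split => //.
  case: (Hc v Hvr Hlb) => [E|[s [Hs E]]]; first by rewrite E inE in Hw.
  by exists s.
have Hx : ancestor par p x.
  apply: Hanc => //; apply/negP => Hs.
  have := Hsrc x Hs; rewrite /adj.
  case/andP: Hsink => _ /forallP /(_ x); rewrite xh /= => /negbTE ->.
  move=> /= Hxp; move: xSN; rewrite !inE Hxp.
  by case/andP: Hxp => -> _; rewrite ?orbT ?andbF.
have step : forall u v, adj_minus S c p u v -> ancestor par p u -> ancestor par p v.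
  move=> u v /and3P [uS vS Huv] Hu.
  move: uS vS; rewrite !inE => /andP [/norP [Hup Hnu] uS] /andP [/norP [Hvp Hnv] vS].
  case/orP: Huv => /and3P [_ _ Hin].
  - have [_ _ Hpl [s [Hs E]]] := Hbr _ _ Hin.
    move: Hin; rewrite E inE => Hin.
    have Ha := @path_anc _ _ _ _ _ _ Hs Hin.
    apply: anc_trans (@anc_par _ _ _ _ Hu Hup) _.
    apply: anc_trans _ Ha; exists 1; by rewrite /= Hpl.
  - have [_ _ Hpl [s [Hs E]]] := Hbr _ _ Hin.
    move: (Hin); rewrite E inE => Hin'.
    case: (@path_anc2 _ _ _ _ _ _ _ Hs Hin' Hu) => [Hp|Ha].
      have : p \in c v by rewrite E inE.
      by move=> Hpc; move: Hnv; rewrite /Defs.arc vS pS Hpc.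
    by apply: anc_of_par; rewrite -Hpl.
case/connectP => s Hs ->.
clear xh xSN.
elim: s x Hx Hs => [|z s IH] x Hx //=.
move=> /andP [Hxz Hs].
exact: IH (step _ _ Hxz Hx) Hs.
Qed.
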